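(* (i) A graph $G$ is $2$-$\chi_\rho$-critical if and only if $G \cong K_2$. (ii) A graph $G$ is $3$-$\chi_\rho$-critical if and only if $G \in \{C_3, P_4\}$ (up to isomorphism).
   Context: Graphs are finite and simple. A $k$-packing coloring of $G$ is a map $c:V(G)\to\{1,\ldots,k\}$ such that two distinct vertices $u,v$ with $c(u)=c(v)=i$ satisfy $d_G(u,v)>i$ (distance between vertices in different components is infinite); $\chi_\rho(G)$ is the smallest $k$ for which such a coloring exists. $G$ is $\chi_\rho$-critical if $\chi_\rho(H)<\chi_\rho(G)$ for every proper subgraph $H$ of $G$, and $k$-$\chi_\rho$-critical if moreover $\chi_\rho(G)=k$. $C_n$ is the cycle and $P_n$ the path on $n$ vertices. *)

(* Defs.v *)
From mathcomp Require Import all_boot.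
Set Implicit Arguments. Unset Strict Implicit. Unset Printing Implicit Defensive.

(* A (sub)graph is given by a vertex set V : {set T} and an edge relation
   E : rel T on a finite type T (edges are only meaningful inside V). *)

Fixpoint dist_le (T : finType) (V : {set T}) (E : rel T) (k : nat) (u v : T)
  : bool :=
  if k is k'.+1 then
    dist_le V E k' u v || [exists w in V, E u w && dist_le V E k' w v]
  else u == v.

(* c : {ffun T -> 'I_k}; vertex x receives colour (c x).+1 in {1,...,k}.
   Two distinct vertices u v of V with the same colour i must satisfy
   d(u,v) > i. *)
Definition is_packing_col (T : finType) (V : {set T}) (E : rel T) (k : nat)
  (c : {ffun T -> 'I_k}) : bool :=
  [forall u, forall v,
     [&& u \in V, v \in V, u != v & c u == c v] ==>
       ~~ dist_le V E (c u).+1 u v].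

Definition packing_colorable (T : finType) (V : {set T}) (E : rel T) (k : nat)
  : bool := [exists c : {ffun T -> 'I_k}, is_packing_col V E c].

Lemma packing_colorable_card (T : finType) (V : {set T}) (E : rel T) :
  exists k, packing_colorable V E k.
Proof.
exists #|T|; apply/existsP; exists [ffun x => enum_rank x].
apply/forallP => u; apply/forallP => v; apply/implyP => /and4P [_ _ nuv].
by rewrite !ffunE => /eqP /enum_rank_inj euv; rewrite euv eqxx in nuv.
Qed.

Definition chi_rho (T : finType) (V : {set T}) (E : rel T) : nat :=
  ex_minn (packing_colorable_card V E).

Definition is_subgraph (T : finType) (e : rel T) (V' : {set T}) (E' : rel T)
  : Prop :=
  symmetric E' /\ (forall u v, E' u v -> [&& e u v, u \in V' & v \in V']).

Definition is_proper_subgraph (T : finType) (e : rel T) (V' : {set T})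
  (E' : rel T) : Prop :=
  is_subgraph e V' E' /\
  ((V' != setT) || [exists u, exists v, e u v && ~~ E' u v]).

Definition chi_critical (T : finType) (e : rel T) (k : nat) : Prop :=
  chi_rho setT e = k /\
  (forall (V' : {set T}) (E' : rel T),
      is_proper_subgraph e V' E' -> chi_rho V' E' < chi_rho setT e).

Definition graph_iso (T T' : finType) (e : rel T) (e' : rel T') : Prop :=
  exists f : T -> T', bijective f /\ (forall x y, e x y = e' (f x) (f y)).

Definition complete_rel (n : nat) : rel 'I_n := fun x y => x != y.
Definition path_rel (n : nat) : rel 'I_n :=
  fun x y => (x.+1 == y :> nat) || (y.+1 == x :> nat).
Definition cycle_rel (n : nat) : rel 'I_n :=
  fun x y => (x.+1 %% n == y :> nat) || (y.+1 %% n == x :> nat).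
Arguments complete_rel n : clear implicits.
Arguments path_rel n : clear implicits.
Arguments cycle_rel n : clear implicits.

(* Main.v *)
Require Import Defs.
From mathcomp Require Import all_boot zify.
From Stdlib Require Import Classical.
Set Implicit Arguments. Unset Strict Implicit. Unset Printing Implicit Defensive.

Section Basics.
Variable T : finType.
Implicit Types (V : {set T}) (E : rel T).

Lemma conflict V E j (c : {ffun T -> 'I_j}) u v : is_packing_col V E c ->
  u \in V -> v \in V -> u != v -> c u = c v -> dist_le V E (c u).+1 u v -> False.
Proof.
move=> /forallP/(_ u)/forallP/(_ v)/implyP H Hu Hv Huv Hc Hd.
by move: (H (introT and4P (And4 Hu Hv Huv (introT eqP Hc)))); rewrite Hd.
Qed.

Lemma dist1 V E u v : v \in V -> E u v -> dist_le V E 1 u v.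
Proof.
move=> Hv Huv /=; apply/orP; right; apply/existsP; exists v; by rewrite Hv Huv eqxx.
Qed.

Lemma dist2 V E u w v : w \in V -> v \in V -> E u w -> E w v -> dist_le V E 2 u v.
Proof.
move=> Hw Hv Huw Hwv /=; apply/orP; right; apply/existsP; exists w.
rewrite Hw Huw /=; exact: (dist1 Hv Hwv).
Qed.

Lemma dist_mono V E k m u v : k <= m -> dist_le V E k u v -> dist_le V E m u v.
Proof.
elim: m => [|m IH]; first by rewrite leqn0 => /eqP ->.
rewrite leq_eqVlt => /orP [/eqP -> //| ]; rewrite ltnS => /IH H d /=.
by rewrite H.
Qed.

Lemma chi_col V E : packing_colorable V E (chi_rho V E).
Proof. rewrite /chi_rho; by case: ex_minnP. Qed.

Lemma chi_le V E k : packing_colorable V E k -> chi_rho V E <= k.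
Proof. rewrite /chi_rho => H; case: ex_minnP => m _ /(_ _ H) //. Qed.

Definition has_edge V E := exists x y, [/\ x \in V, y \in V, x != y & E x y].
Definition has_tri V E := exists x y z, x \in V /\ y \in V /\ z \in V /\
  x != y /\ y != z /\ z != x /\ E x y /\ E y z /\ E z x.
Definition has_p4 V E := exists a b c d, a \in V /\ b \in V /\ c \in V /\ d \in V /\
  a != b /\ a != c /\ a != d /\ b != c /\ b != d /\ c != d /\
  E a b /\ E b c /\ E c d.

Lemma edge_chi V E : has_edge V E -> 2 <= chi_rho V E.
Proof.
move=> [x [y [Hx Hy nxy Exy]]].
have := chi_col V E; move: (chi_rho V E) => j /existsP [c Hc].
rewrite leqNgt; apply/negP => hj.
have Hcx := ltn_ord (c x); have Hcy := ltn_ord (c y).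
have ce : c x = c y by apply: ord_inj; move: Hcx Hcy hj; clear; lia.
apply: (conflict Hc Hx Hy nxy ce); apply: (dist_mono _ (dist1 Hy Exy)); done.
Qed.

Lemma tri_chi V E : has_tri V E -> 3 <= chi_rho V E.
Proof.
move=> [x [y [z [Hx [Hy [Hz [nxy [nyz [nzx [Exy [Eyz Ezx]]]]]]]]]]].
have := chi_col V E; move: (chi_rho V E) => j /existsP [c Hc].
rewrite leqNgt; apply/negP => hj.
have Hcx := ltn_ord (c x); have Hcy := ltn_ord (c y); have Hcz := ltn_ord (c z).
have [ce|[ce|ce]] : c x = c y \/ c y = c z \/ c z = c x.
  have : (nat_of_ord (c x) == c y) || (nat_of_ord (c y) == c z) || (nat_of_ord (c z) == c x)
    by move: Hcx Hcy Hcz hj; clear; lia.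
  by move=> /orP [/orP [/eqP/ord_inj|/eqP/ord_inj]|/eqP/ord_inj]; auto.
- by apply: (conflict Hc Hx Hy nxy ce); apply: (dist_mono _ (dist1 Hy Exy)).
- by apply: (conflict Hc Hy Hz nyz ce); apply: (dist_mono _ (dist1 Hz Eyz)).
- by apply: (conflict Hc Hz Hx nzx ce); apply: (dist_mono _ (dist1 Hx Ezx)).
Qed.

Lemma p4_chi V E : has_p4 V E -> 3 <= chi_rho V E.
Proof.
move=> [a [b [c [d [Ha [Hb [Hc [Hd [nab [nac [nad [nbc [nbd [ncd [Eab [Ebc Ecd]]]]]]]]]]]]]]]].
have := chi_col V E; move: (chi_rho V E) => j /existsP [k Hk].
rewrite leqNgt; apply/negP => hj.
have Ha' := ltn_ord (k a); have Hb' := ltn_ord (k b).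
have Hc' := ltn_ord (k c); have Hd' := ltn_ord (k d).
case: (eqVneq (k b) (k c)) => [ce|ne].
  by apply: (conflict Hk Hb Hc nbc ce); apply: (dist_mono _ (dist1 Hc Ebc)).
case: (eqVneq (k a) (k b)) => [ce|ne2].
  by apply: (conflict Hk Ha Hb nab ce); apply: (dist_mono _ (dist1 Hb Eab)).
case: (eqVneq (k c) (k d)) => [ce|ne3].
  by apply: (conflict Hk Hc Hd ncd ce); apply: (dist_mono _ (dist1 Hd Ecd)).
move: ne ne2 ne3; rewrite -!(inj_eq (@ord_inj _)) => ne ne2 ne3.
case: (posnP (k b)) => kb0.
- have ce : k a = k c by apply: ord_inj; move: Ha' Hb' Hc' hj ne ne2 kb0; clear; lia.
  apply: (conflict Hk Ha Hc nac ce); apply: (dist_mono _ (dist2 Hb Hc Eab Ebc)).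
  move: Ha' Hb' Hc' hj ne ne2 kb0; clear; move: (nat_of_ord (k a)) (nat_of_ord (k b)) (nat_of_ord (k c)) => xa xb xc; lia.
- have ce : k b = k d by apply: ord_inj; move: Hd' Hb' Hc' hj ne ne3 kb0; clear; lia.
  apply: (conflict Hk Hb Hd nbd ce); apply: (dist_mono _ (dist2 Hc Hd Ebc Ecd)).
  move: Hd' Hb' Hc' hj ne ne3 kb0; clear; move: (nat_of_ord (k d)) (nat_of_ord (k b)) (nat_of_ord (k c)) => xa xb xc; lia.
Qed.

End Basics.

Section Upper.
Variable T : finType.
Implicit Types (V : {set T}) (E : rel T).

Lemma noedge_chi V E : ~ has_edge V E -> chi_rho V E <= 1.
Proof.
move=> H; apply: chi_le; apply/existsP; exists [ffun=> (ord0 : 'I_1)].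
apply/forallP=> u; apply/forallP=> v; apply/implyP => /and4P [Hu Hv nuv _].
rewrite !ffunE /= (negbTE nuv) /=; apply/existsP => [[w /and3P [Hw Euw /eqP ewv]]].
by subst; apply: H; exists u, v.
Qed.

Lemma dist1_inv V E u v : dist_le V E 1 u v -> u = v \/ E u v.
Proof.
move=> /= /orP [/eqP -> | /existsP [w /and3P [_ Euw /eqP ewv]]]; [by left|].
by subst; right.
Qed.

Lemma dist2_inv V E u v : dist_le V E 2 u v ->
  u = v \/ E u v \/ exists w, [/\ w \in V, E u w & E w v].
Proof.
move=> /orP [/dist1_inv [|]|]; [by left|by right; left|].
move=> /existsP [w /and3P [Hw Euw /dist1_inv [ewv|Ewv]]]; first by subst; right; left.
by right; right; exists w.
Qed.

Variables (V : {set T}) (E : rel T).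
Hypothesis Hsym : symmetric E.
Hypothesis Hirr : irreflexive E.
Hypothesis notri : ~ has_tri V E.
Hypothesis nop4 : ~ has_p4 V E.

Definition big x := [exists y in V, exists z in V, E x y && E x z && (y != z)].
Definition col x := big x ||
  [exists y in V, E x y && ~~ big y && (enum_rank x < enum_rank y)].

Lemma neqE x y : E x y -> x != y.
Proof. by apply: contraTneq => ->; rewrite Hirr. Qed.

Ltac solve_ne := first [ done | exact: neqE | (rewrite eq_sym; exact: neqE) | (rewrite Hsym; done) | (rewrite eq_sym; done) ].

Lemma nbig_uniq x y z : ~~ big x -> y \in V -> z \in V -> E x y -> E x z -> y = z.
Proof.
move=> nb Hy Hz Exy Exz; apply/eqP; apply: contraNT nb => nyz.
apply/existsP; exists y; rewrite Hy /=; apply/existsP; exists z.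
by rewrite Hz Exy Exz nyz.
Qed.

Lemma bigP x v : big x -> exists2 u, u \in V & E x u && (u != v).
Proof.
move=> /existsP [y /andP [Hy /existsP [z /andP [Hz /andP [/andP [Exy Exz] nyz]]]]].
case: (eqVneq y v) => [eyv|nyv]; last by exists y; rewrite ?Exy ?nyv.
by exists z; rewrite // Exz -eyv eq_sym.
Qed.

Lemma half v u : col v -> ~~ big v -> E v u -> u \in V ->
  ~~ big u /\ enum_rank v < enum_rank u.
Proof.
rewrite /col => /orP [-> //|/existsP [y /andP [Hy /andP [/andP [Evy nby] lt]]]] nbv Evu Hu.
by have eyu := nbig_uniq nbv Hy Hu Evy Evu; subst.
Qed.

Lemma edge_case u v : col u -> col v -> E u v -> u \in V -> v \in V -> False.
Proof.
move=> cu cv Euv Hu Hv.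
have Evu : E v u by rewrite Hsym.
case bu: (big u); case bv: (big v).
- have [u' Hu' /andP [Euu' nu'v]] := bigP v bu.
  have [v' Hv' /andP [Evv' nv'u]] := bigP u bv.
  case: (eqVneq u' v') => [e'|ne'].
    subst v'; apply: notri; exists u, v, u'; do !split; solve_ne.
  apply: nop4; exists u', u, v, v'; do !split; solve_ne.
- by have [] := half cv (negbT bv) Evu Hu; rewrite bu.
- by have [] := half cu (negbT bu) Euv Hv; rewrite bv.
- have [_ l1] := half cv (negbT bv) Evu Hu.
  have [_ l2] := half cu (negbT bu) Euv Hv.
  by move: (ltn_trans l1 l2); rewrite ltnn.
Qed.

Lemma ncol_edge u v : ~~ col u -> ~~ col v -> E u v -> u \in V -> v \in V -> u = v.
Proof.
rewrite /col !negb_or => /andP [nbu /existsPn nu] /andP [nbv /existsPn nv] Euv Hu Hv.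
have := nu v; rewrite Hv Euv nbv /= -leqNgt => l1.
have := nv u; rewrite Hu Hsym Euv nbu /= -leqNgt => l2.
apply: enum_rank_inj; apply: ord_inj; apply/eqP; by rewrite eqn_leq l1 l2.
Qed.

Lemma path_case u w v : col u -> E u w -> E w v -> u != v ->
  u \in V -> w \in V -> v \in V -> False.
Proof.
move=> cu Euw Ewv nuv Hu Hw Hv.
have bw : big w.
  apply/existsP; exists u; rewrite Hu /=; apply/existsP; exists v.
  by rewrite Hv -(Hsym u) Euw Ewv nuv.
case bu: (big u); last by have [] := half cu (negbT bu) Euw Hw; rewrite bw.
have [u' Hu' /andP [Euu' nu'w]] := bigP w bu.
case: (eqVneq u' v) => [e'|ne'].
  subst u'; apply: notri; exists u, w, v; do !split; solve_ne.
apply: nop4; exists u', u, w, v; do !split; solve_ne.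
Qed.

Lemma L4_chi : chi_rho V E <= 2.
Proof.
apply: chi_le; apply/existsP.
exists [ffun x => if col x then (ord_max : 'I_2) else ord0].
apply/forallP=> u; apply/forallP=> v; apply/implyP => /and4P [Hu Hv nuv].
rewrite !ffunE.
case cu: (col u); case cv: (col v) => // _ /=.
- apply/negP => /dist2_inv [euv|[Euv|[w [Hw Euw Ewv]]]].
  + by rewrite euv eqxx in nuv.
  + exact: (edge_case cu cv Euv Hu Hv).
  + exact: (path_case cu Euw Ewv nuv Hu Hw Hv).
- apply/negP => /dist1_inv [euv|Euv]; first by rewrite euv eqxx in nuv.
  by have := ncol_edge (negbT cu) (negbT cv) Euv Hu Hv; move=> euv; rewrite euv eqxx in nuv.
Qed.

End Upper.

Lemma crit_notproper (T : finType) (e : rel T) k V' E' : chi_critical e k ->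
  is_subgraph e V' E' -> k <= chi_rho V' E' ->
  V' = setT /\ (forall u v, e u v -> E' u v).
Proof.
move=> [Hk Hp] Hs Hle.
case b: ((V' != setT) || [exists u, exists v, e u v && ~~ E' u v]).
  by have := Hp V' E' (conj Hs b); rewrite Hk ltnNge Hle.
move/negbT: b; rewrite negb_or negbK => /andP [/eqP -> /existsPn H]; split => // u v euv.
by move: (H u) => /existsPn /(_ v); rewrite euv /= negbK.
Qed.

Lemma not_proper (T : finType) (e : rel T) V' E' : is_proper_subgraph e V' E' ->
  V' = setT -> (forall u v, e u v -> E' u v) -> False.
Proof.
move=> [_ H] HV HE; move: H; rewrite HV eqxx /= => /existsP [u /existsP [v /andP [euv]]].
by rewrite HE.
Qed.

Lemma iso_of_seq (T : finType) (e : rel T) m (e' : rel 'I_m.+1) (s : seq T) x0 :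
  size s = m.+1 -> uniq s -> (forall t, t \in s) ->
  (forall i j : 'I_m.+1, e (nth x0 s i) (nth x0 s j) = e' i j) -> graph_iso e e'.
Proof.
move=> Hsz Hu Hin He.
have Hidx t : index t s < m.+1 by rewrite -Hsz index_mem.
pose f t := (inord (index t s) : 'I_m.+1).
have fK : cancel f (fun i => nth x0 s i) by move=> t; rewrite /f inordK // nth_index.
have gK : cancel (fun i : 'I_m.+1 => nth x0 s i) f.
  by move=> i; apply: ord_inj; rewrite /f index_uniq ?Hsz // inordK.
exists f; split; first exact: (Bijective fK gK).
by move=> x y; rewrite -He !fK.
Qed.

Lemma I2 (i j k : 'I_2) : i != j -> (k == i) || (k == j).
Proof.
by case: i => [[|[|?]] ?] //; case: j => [[|[|?]] ?] //; case: k => [[|[|?]] ?].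
Qed.

Lemma part1 (T : finType) (e : rel T) : symmetric e -> irreflexive e ->
  (chi_critical e 2 <-> graph_iso e (complete_rel 2)).
Proof.
move=> Hsym Hirr; split.
- move=> cr; have [H2 _] := cr.
  have [x [y [_ _ nxy exy]]] : has_edge setT e.
    by apply: NNPP => H; have := noedge_chi H; rewrite H2.
  pose V' := [set x; y].
  pose E' := fun u v => ((u==x)&&(v==y)) || ((u==y)&&(v==x)).
  have Hs : is_subgraph e V' E'.
    split; first by move=> u v; rewrite /E' orbC; congr orb; rewrite andbC.
    move=> u v /orP [] /andP [/eqP -> /eqP ->]; rewrite !inE !eqxx ?orbT ?andbT //.
    by rewrite Hsym.
  have hE : has_edge V' E'.
    by exists x, y; split; rewrite ?inE ?eqxx ?orbT // /E' !eqxx.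
  have [HV HE] := crit_notproper cr Hs (edge_chi hE).
  apply: (@iso_of_seq _ _ 1 _ [:: x; y] x) => //.
  + by rewrite /= inE nxy.
  + move=> t; have : t \in V' by rewrite HV inE.
    by rewrite !inE.
  + case=> [[|[|?]] ?] //; case=> [[|[|?]] ?] //=; rewrite /complete_rel /=.
    all: try by rewrite ?Hirr ?exy // Hsym.
- move=> [f [[g fg gf] fe]].
  have ginj := can_inj gf; have finj := can_inj fg.
  have chi2 : chi_rho setT e = 2.
    apply/eqP; rewrite eqn_leq; apply/andP; split.
      apply: chi_le; apply/existsP; exists [ffun t => f t].
      apply/forallP=> u; apply/forallP=> v; apply/implyP=> /and4P [_ _ nuv].
      by rewrite !ffunE => /eqP /finj euv; rewrite euv eqxx in nuv.
    apply: edge_chi; exists (g ord0), (g ord_max); split; rewrite ?inE //.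
      by rewrite (inj_eq ginj).
    by rewrite fe !gf.
  split => // V' E' [[Hs1 Hs2] Hpr]; rewrite chi2 ltnS.
  apply: noedge_chi => [[u [v [Hu Hv nuv Euv]]]].
  have /and3P [euv _ _] := Hs2 _ _ Euv.
  have cover t : (t == u) || (t == v).
    by move: euv; rewrite fe /complete_rel => /(I2 (f t)); rewrite !(inj_eq finj).
  apply: (not_proper (conj (conj Hs1 Hs2) Hpr)).
    by apply/setP => t; rewrite inE; case/orP: (cover t) => /eqP ->.
  move=> a b eab; have nab : a != b by apply: contraTneq eab => ->; rewrite Hirr.
  case/orP: (cover a) => /eqP ea; case/orP: (cover b) => /eqP eb; subst;
    rewrite ?eqxx // in nab.
  by rewrite Hs1.
Qed.

Lemma I3 (i j k l : 'I_3) : i != j -> i != k -> i != l -> j != k -> j != l -> k != l -> False.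
Proof.
by case: i => [[|[|[|?]]] ?] //; case: j => [[|[|[|?]]] ?] //;
case: k => [[|[|[|?]]] ?] //; case: l => [[|[|[|?]]] ?].
Qed.

Lemma notri4 (i j k : 'I_4) : path_rel 4 i j -> path_rel 4 j k -> path_rel 4 k i -> False.
Proof.
by case: i => [[|[|[|[|?]]]] ?] //; case: j => [[|[|[|[|?]]]] ?] //;
case: k => [[|[|[|[|?]]]] ?].
Qed.

Lemma brute_p4 (i j k l p q : 'I_4) : path_rel 4 i j -> path_rel 4 j k -> path_rel 4 k l ->
  i != k -> j != l -> i != l -> path_rel 4 p q ->
  [|| (p == i) && (q == j), (p == j) && (q == i), (p == j) && (q == k),
      (p == k) && (q == j), (p == k) && (q == l) | (p == l) && (q == k)].
Proof.
case: i => [[|[|[|[|?]]]] ?] //; case: j => [[|[|[|[|?]]]] ?] //;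
case: k => [[|[|[|[|?]]]] ?] //; case: l => [[|[|[|[|?]]]] ?] //;
case: p => [[|[|[|[|?]]]] ?] //; case: q => [[|[|[|[|?]]]] ?] //.
Qed.

Lemma cover4 (i j k l t : 'I_4) : path_rel 4 i j -> path_rel 4 j k -> path_rel 4 k l ->
  i != k -> j != l -> i != l -> [|| t == i, t == j, t == k | t == l].
Proof.
case: i => [[|[|[|[|?]]]] ?] //; case: j => [[|[|[|[|?]]]] ?] //;
case: k => [[|[|[|[|?]]]] ?] //; case: l => [[|[|[|[|?]]]] ?] //;
case: t => [[|[|[|[|?]]]] ?] //.
Qed.

Definition col4 (i : 'I_4) : 'I_3 :=
  match nat_of_ord i with
  | 1 => Ordinal (isT : 1 < 3)
  | 3 => Ordinal (isT : 2 < 3)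
  | _ => Ordinal (isT : 0 < 3)
  end.

Lemma brute_col (i j : 'I_4) : i != j -> col4 i == col4 j ->
  (nat_of_ord (col4 i) == 0) && ~~ path_rel 4 i j.
Proof.
by case: i => [[|[|[|[|?]]]] ?] //; case: j => [[|[|[|[|?]]]] ?].
Qed.

Lemma part2_fwd (T : finType) (e : rel T) : symmetric e -> irreflexive e ->
  chi_critical e 3 -> graph_iso e (cycle_rel 3) \/ graph_iso e (path_rel 4).
Proof.
move=> Hsym Hirr cr; have [H3 _] := cr.
have : has_tri setT e \/ has_p4 setT e.
  apply: NNPP => H.
  have := L4_chi (V:=setT) Hsym Hirr (fun t => H (or_introl t)) (fun p => H (or_intror p)).
  by rewrite H3.
case.
- move=> [x [y [z [_ [_ [_ [nxy [nyz [nzx [exy [eyz ezx]]]]]]]]]]].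
  pose V' := [set x; y; z].
  pose E' := fun u v => [&& u \in V', v \in V' & e u v].
  have hx : x \in V' by rewrite !inE eqxx ?orbT.
  have hy : y \in V' by rewrite !inE eqxx ?orbT.
  have hz : z \in V' by rewrite !inE eqxx ?orbT.
  have Hs : is_subgraph e V' E'.
    split; first by move=> u v; rewrite /E' Hsym; case: (u \in V'); case: (v \in V').
    by move=> u v /and3P [? ? ?]; apply/and3P.
  have hT : has_tri V' E'.
    by exists x, y, z; do !split => //; rewrite /E' ?hx ?hy ?hz.
  have [HV _] := crit_notproper cr Hs (tri_chi hT).
  left; apply: (@iso_of_seq _ _ 2 _ [:: x; y; z] x) => //.
  + by rewrite /= !inE !negb_or nxy nyz (eq_sym x z) nzx.
  + move=> t; have : t \in V' by rewrite HV inE.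
    by rewrite !inE !orbA.
  + case=> [[|[|[|?]]] ?] //; case=> [[|[|[|?]]] ?] //=; rewrite /cycle_rel /=.
    all: try by rewrite ?Hirr ?exy ?eyz ?ezx // Hsym ?exy ?eyz ?ezx.
- move=> [a [b [c [d [_ [_ [_ [_ [nab [nac [nad [nbc [nbd [ncd [eab [ebc ecd]]]]]]]]]]]]]]]].
  pose V' := [set a; b; c; d].
  pose E' := fun u v => [|| (u==a)&&(v==b), (u==b)&&(v==a), (u==b)&&(v==c),
      (u==c)&&(v==b), (u==c)&&(v==d) | (u==d)&&(v==c)].
  have ha : a \in V' by rewrite !inE eqxx ?orbT.
  have hb : b \in V' by rewrite !inE eqxx ?orbT.
  have hc : c \in V' by rewrite !inE eqxx ?orbT.
  have hd : d \in V' by rewrite !inE eqxx ?orbT.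
  have Hs : is_subgraph e V' E'.
    split.
      move=> u v; rewrite /E'.
      by case: (u == a); case: (u == b); case: (u == c); case: (u == d);
        case: (v == a); case: (v == b); case: (v == c); case: (v == d).
    move=> u v; rewrite /E'.
    case/orP => [|/orP[|/orP[|/orP[|/orP[|]]]]] /andP [/eqP -> /eqP ->];
      rewrite ?ha ?hb ?hc ?hd ?andbT //; by rewrite Hsym.
  have [Hs1 Hs2] := Hs.
  have hP : has_p4 V' E'.
    by exists a, b, c, d; do !split => //; rewrite /E' !eqxx ?orbT.
  have [HV HE] := crit_notproper cr Hs (p4_chi hP).
  have eE : forall u v, e u v = E' u v.
    by move=> u v; apply/idP/idP; [exact: HE | move/Hs2 => /and3P []].
  have nba : b != a by rewrite eq_sym.
  have nca : c != a by rewrite eq_sym.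
  have nda : d != a by rewrite eq_sym.
  have ncb : c != b by rewrite eq_sym.
  have ndb : d != b by rewrite eq_sym.
  have ndc : d != c by rewrite eq_sym.
  right; apply: (@iso_of_seq _ _ 3 _ [:: a; b; c; d] a) => //.
  + by rewrite /= !inE !negb_or nab nac nad nbc nbd ncd.
  + move=> t; have : t \in V' by rewrite HV inE.
    by rewrite !inE !orbA.
  + move=> i j; rewrite eE /E'.
    case: i => [[|[|[|[|?]]]] ?] //; case: j => [[|[|[|[|?]]]] ?] //=;
    rewrite /path_rel /=.
    all: by rewrite ?eqxx ?(negbTE nab) ?(negbTE nac) ?(negbTE nad) ?(negbTE nbc)
      ?(negbTE nbd) ?(negbTE ncd) ?(negbTE nba) ?(negbTE nca) ?(negbTE nda)
      ?(negbTE ncb) ?(negbTE ndb) ?(negbTE ndc).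
Qed.

Lemma irr_sub (T : finType) (e : rel T) V' E' : irreflexive e ->
  is_subgraph e V' E' -> irreflexive E'.
Proof. by move=> Hirr [_ Hs2] u; apply/negP => /Hs2 /and3P [h _ _]; rewrite Hirr in h. Qed.

Lemma part2_C3 (T : finType) (e : rel T) : symmetric e -> irreflexive e ->
  graph_iso e (cycle_rel 3) -> chi_critical e 3.
Proof.
move=> Hsym Hirr [f [[g fg gf] fe]].
have ginj := can_inj gf; have finj := can_inj fg.
have chi3 : chi_rho setT e = 3.
  apply/eqP; rewrite eqn_leq; apply/andP; split.
    apply: chi_le; apply/existsP; exists [ffun t => f t].
    apply/forallP=> u; apply/forallP=> v; apply/implyP=> /and4P [_ _ nuv].
    by rewrite !ffunE => /eqP /finj euv; rewrite euv eqxx in nuv.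
  apply: tri_chi.
  exists (g (Ordinal (isT : 0 < 3))), (g (Ordinal (isT : 1 < 3))), (g (Ordinal (isT : 2 < 3))).
  by do !split; rewrite ?inE ?(inj_eq ginj) // fe !gf.
split => // V' E' [Hs Hpr]; rewrite chi3 ltnS.
have irrE := irr_sub Hirr Hs.
have [Hs1 Hs2] := Hs.
apply: (L4_chi Hs1 irrE).
- move=> [x [y [z [Hx [Hy [Hz [nxy [nyz [nzx [Exy [Eyz Ezx]]]]]]]]]]].
  have cover t : [|| t == x, t == y | t == z].
    apply: contraT; rewrite !negb_or => /and3P [n1 n2 n3]; exfalso.
    apply: (I3 (i:=f x) (j:=f y) (k:=f z) (l:=f t)); by rewrite (inj_eq finj) // eq_sym.
  apply: (not_proper (conj Hs Hpr)).
    by apply/setP => t; rewrite inE; case/or3P: (cover t) => /eqP ->.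
  move=> p q; case/or3P: (cover p) => /eqP ->; case/or3P: (cover q) => /eqP -> epq.
  all: try by rewrite Hirr in epq.
  all: try by rewrite // Hs1.
- move=> [a [b [c [d [_ [_ [_ [_ [nab [nac [nad [nbc [nbd [ncd _]]]]]]]]]]]]]].
  apply: (I3 (i:=f a) (j:=f b) (k:=f c) (l:=f d)).
  all: by rewrite (inj_eq finj).
Qed.

Lemma part2_P4 (T : finType) (e : rel T) : symmetric e -> irreflexive e ->
  graph_iso e (path_rel 4) -> chi_critical e 3.
Proof.
move=> Hsym Hirr [f [[g fg gf] fe]].
have ginj := can_inj gf; have finj := can_inj fg.
have chi3 : chi_rho setT e = 3.
  apply/eqP; rewrite eqn_leq; apply/andP; split.
    apply: chi_le; apply/existsP; exists [ffun t => col4 (f t)].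
    apply/forallP=> u; apply/forallP=> v; apply/implyP=> /and4P [_ _ nuv].
    rewrite !ffunE => ce.
    have nf : f u != f v by rewrite (inj_eq finj).
    have /andP [/eqP -> np] := brute_col nf ce.
    apply/negP => /dist1_inv [euv|euv]; first by rewrite euv eqxx in nuv.
    by rewrite fe (negbTE np) in euv.
  apply: p4_chi.
  exists (g (Ordinal (isT : 0 < 4))), (g (Ordinal (isT : 1 < 4))),
    (g (Ordinal (isT : 2 < 4))), (g (Ordinal (isT : 3 < 4))).
  by do !split; rewrite ?inE ?(inj_eq ginj) // fe !gf.
split => // V' E' [Hs Hpr]; rewrite chi3 ltnS.
have irrE := irr_sub Hirr Hs.
have [Hs1 Hs2] := Hs.
have fE u v : E' u v -> path_rel 4 (f u) (f v).
  by move=> /Hs2 /and3P [h _ _]; rewrite -fe.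
apply: (L4_chi Hs1 irrE).
- move=> [x [y [z [_ [_ [_ [_ [_ [_ [Exy [Eyz Ezx]]]]]]]]]]].
  exact: (notri4 (fE _ _ Exy) (fE _ _ Eyz) (fE _ _ Ezx)).
- move=> [a [b [c [d [Ha [Hb [Hc [Hd [nab [nac [nad [nbc [nbd [ncd [Eab [Ebc Ecd]]]]]]]]]]]]]]]].
  have nfac : f a != f c by rewrite (inj_eq finj).
  have nfbd : f b != f d by rewrite (inj_eq finj).
  have nfad : f a != f d by rewrite (inj_eq finj).
  have pab := fE _ _ Eab; have pbc := fE _ _ Ebc; have pcd := fE _ _ Ecd.
  apply: (not_proper (conj Hs Hpr)).
    apply/setP => t; rewrite inE.
    have := cover4 (f t) pab pbc pcd nfac nfbd nfad; rewrite !(inj_eq finj).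
    by case/or4P => /eqP ->.
  move=> p q epq; rewrite fe in epq.
  have := brute_p4 pab pbc pcd nfac nfbd nfad epq; rewrite !(inj_eq finj).
  case/orP => [|/orP[|/orP[|/orP[|/orP[|]]]]] /andP [/eqP -> /eqP ->] //; by rewrite Hs1.
Qed.

Theorem proposition3p1 :
  (forall (T : finType) (e : rel T), symmetric e -> irreflexive e ->
     (chi_critical e 2 <-> graph_iso e (complete_rel 2))) /\
  (forall (T : finType) (e : rel T), symmetric e -> irreflexive e ->
     (chi_critical e 3 <->
        graph_iso e (cycle_rel 3) \/ graph_iso e (path_rel 4))).
Proof.
split; first exact: part1.
move=> T e Hs Hi; split; first exact: part2_fwd.
by case; [exact: part2_C3 | exact: part2_P4].
Qed.
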